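(* Let $\tau$ be a distributive triangle function on $\Delta^+$, $\Sigma$ a ring of subsets of $\Omega\ne\emptyset$, $\gamma$ a $\tau$-decomposable measure on $\Sigma$, and $f,g$ simple functions with $f\le g$. Then $\int_E f\,d\gamma\ge\int_E g\,d\gamma$ for every $E\in\Sigma$.
   Context: $\Delta^+$: functions $F:[-\infty,+\infty]\to[0,1]$ non-decreasing, left-continuous on $\mathbb{R}$, $F(x)=0$ for $x\le0$, $F(+\infty)=1$, ordered pointwise; $\varepsilon_0(x)=1$ if $x>0$, else $0$. Triangle function: symmetric, associative $\tau:\Delta^+\times\Delta^+\to\Delta^+$, non-decreasing in each variable, identity $\varepsilon_0$; $G\oplus H=\tau(G,H)$, $\bigoplus_{k=1}^nG_k=\tau(G_1,\bigoplus_{k=2}^nG_k)$. $c\odot G=\varepsilon_0$ if $c=0$, $(c\odot G)(x)=G(x/c)$ if $c>0$; $\tau$ distributive if $c\odot(G\oplus H)=(c\odot G)\oplus(c\odot H)$ for all $c\ge0$. $\tau$-decomposable measure: $\gamma:\Sigma\to\Delta^+$ with $\gamma_\emptyset=\varepsilon_0$, $\gamma_{A\cup B}=\tau(\gamma_A,\gamma_B)$ for disjoint $A,B\in\Sigma$. A simple function is $f=\sum_{i=1}^nx_i\chi_{E_i}$ with $x_i\in[0,\infty)$ and $E_i\in\Sigma$ pairwise disjoint, and $\int_Ef\,d\gamma=\bigoplus_{i=1}^nx_i\odot\gamma_{E\cap E_i}$ (independent of the representation). *)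

(* Defs.v *)
From HB Require Import structures.
From mathcomp Require Import all_boot all_order all_algebra.
From mathcomp Require Import all_classical all_reals all_analysis.
Set Implicit Arguments. Unset Strict Implicit. Unset Printing Implicit Defensive.
Import Order.TTheory GRing.Theory Num.Theory.
Import numFieldNormedType.Exports.
Local Open Scope classical_set_scope.
Local Open Scope ring_scope.

Section Defs.
Variable R : realType.

Definition dfun := \bar R -> R.

Definition inDelta (F : dfun) : Prop :=
  [/\ (forall x, 0 <= F x <= 1),
      (forall x y : \bar R, (x <= y)%E -> F x <= F y),
      (forall x : R, (fun y : R => F y%:E) @ x^'- --> F x%:E),
      (forall x : \bar R, (x <= 0)%E -> F x = 0)
    & F +oo%E = 1].

Definition dle (F G : dfun) : Prop := forall x : \bar R, F x <= G x.

Definition eps0 : dfun := fun x => if (0 < x)%E then 1 else 0.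

Definition dscale (c : R) (G : dfun) : dfun :=
  if c == 0 then eps0 else fun x => G (x * (c^-1)%:E)%E.

Definition is_triangle_function (tau : dfun -> dfun -> dfun) : Prop :=
  [/\ (forall G H, inDelta G -> inDelta H -> inDelta (tau G H)),
      (forall G H, inDelta G -> inDelta H -> tau G H = tau H G),
      (forall G H K, inDelta G -> inDelta H -> inDelta K ->
          tau G (tau H K) = tau (tau G H) K),
      ((forall G G' H, inDelta G -> inDelta G' -> inDelta H ->
          dle G G' -> dle (tau G H) (tau G' H)) /\
      (forall G H H', inDelta G -> inDelta H -> inDelta H' ->
          dle H H' -> dle (tau G H) (tau G H')))
    & (forall G, inDelta G -> tau G eps0 = G)].

Definition distributive_tf (tau : dfun -> dfun -> dfun) : Prop :=
  forall (c : R) G H, 0 <= c -> inDelta G -> inDelta H ->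
    dscale c (tau G H) = tau (dscale c G) (dscale c H).

Definition tau_decomposable {Omega : Type} (tau : dfun -> dfun -> dfun)
  (Sigma : set (set Omega)) (gamma : set Omega -> dfun) : Prop :=
  [/\ (forall A, Sigma A -> inDelta (gamma A)),
      gamma set0 = eps0
    & (forall A B, Sigma A -> Sigma B -> A `&` B = set0 ->
         gamma (A `|` B) = tau (gamma A) (gamma B))].

Definition simple_rep {Omega : Type} (Sigma : set (set Omega)) (n : nat)
  (x : 'I_n -> R) (E : 'I_n -> set Omega) (f : Omega -> R) : Prop :=
  [/\ (forall i, 0 <= x i),
      (forall i, Sigma (E i)),
      (forall i j, i != j -> E i `&` E j = set0)
    & (forall w, f w = \sum_(i < n) x i * \1_(E i) w)].

(* int_A f dgamma := (+)_{i} x_i ⊙ gamma_{A ∩ E_i}, n-ary (+) as a right fold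
   tau(G_1, tau(G_2, ... tau(G_n, eps0))) (eps0 is the identity of tau). *)
Definition simple_integral {Omega : Type} (tau : dfun -> dfun -> dfun)
  (gamma : set Omega -> dfun) (n : nat) (x : 'I_n -> R)
  (E : 'I_n -> set Omega) (A : set Omega) : dfun :=
  \big[tau/eps0]_(i < n) dscale (x i) (gamma (A `&` E i)).

End Defs.

(* Main.v *)
From Pilot Require Import Defs.
From HB Require Import structures.
From mathcomp Require Import all_boot all_order all_algebra.
From mathcomp Require Import all_classical all_reals all_analysis.
Import Order.TTheory GRing.Theory Num.Theory.
Import numFieldNormedType.Exports.
Import Pilot.Defs.
Local Open Scope classical_set_scope.
Local Open Scope ring_scope.

Lemma inDelta_dscale (R : realType) (c : R) (F : dfun R) :
  inDelta (@eps0 R) -> 0 <= c -> inDelta F -> inDelta (dscale c F).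
Proof.
move=> he; rewrite le_eqVlt => /orP[/eqP<-|c0]; first by rewrite /dscale eqxx.
case=> H1 H2 H3 H4 H5.
rewrite /dscale gt_eqF //.
have ci : (0 < c^-1) by rewrite invr_gt0.
have cie : (0 < (c^-1)%:E)%E by rewrite lte_fin.
split.
- by move=> x; apply: H1.
- by move=> x y xy; apply: H2; apply: lee_wpmul2r => //; exact: ltW.
- move=> x.
  have -> : (fun y : R => F (y%:E * (c^-1)%:E)%E) = (fun y : R => F y%:E) \o (fun y => y * c^-1).
    by apply: funext => y /=; rewrite EFinM.
  rewrite -EFinM.
  apply: (@increasing_cvg_at_left_comp R (fun y => y * c^-1) (fun y => F y%:E) (BInfty R true)).
  + by [].
  + by move=> a b _ _ ab; rewrite ltr_pM2r.
  + apply: cvg_at_left_filter; apply: cvgMl; exact: cvg_id.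
  + exact: H3.
- by move=> x x0; apply: H4; rewrite pmule_lle0.
- by rewrite gt0_mulye.
Qed.

Section Tau.
Variables (R : realType) (tau : dfun R -> dfun R -> dfun R).
Hypothesis Htau : is_triangle_function tau.
Hypothesis Hdist : distributive_tf tau.
Hypothesis he : inDelta (@eps0 R).
Local Notation DD := (@inDelta R).
Implicit Types (G H K : dfun R) (c : R).
Local Notation "\BIG_ ( i < n ) F" := (\big[tau/@eps0 R]_(i < n) F)
  (at level 41, F at level 41, i, n at level 50).

Lemma tauD G H : DD G -> DD H -> DD (tau G H).
Proof. by case: Htau => h _ _ _ _; apply: h. Qed.
Lemma tauC G H : DD G -> DD H -> tau G H = tau H G.
Proof. by case: Htau => _ h _ _ _; apply: h. Qed.
Lemma tauA G H K : DD G -> DD H -> DD K -> tau G (tau H K) = tau (tau G H) K.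
Proof. by case: Htau => _ _ h _ _; apply: h. Qed.
Lemma tau_monol G (G' : dfun R) H : DD G -> DD G' -> DD H -> dle G G' -> dle (tau G H) (tau G' H).
Proof. by case: Htau => _ _ _ [h _] _; apply: h. Qed.
Lemma tau_monor G H (H' : dfun R) : DD G -> DD H -> DD H' -> dle H H' -> dle (tau G H) (tau G H').
Proof. by case: Htau => _ _ _ [_ h] _; apply: h. Qed.
Lemma tau_idr G : DD G -> tau G (@eps0 R) = G.
Proof. by case: Htau => _ _ _ _ h; apply: h. Qed.
Lemma tau_idl G : DD G -> tau (@eps0 R) G = G.
Proof. by move=> hG; rewrite tauC // tau_idr. Qed.

Lemma dle_refl G : dle G G.
Proof. by move=> x. Qed.
Lemma dle_trans G H K : dle G H -> dle H K -> dle G K.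
Proof. by move=> a b x; apply: le_trans (a x) (b x). Qed.

Lemma tau_mono G (G' : dfun R) H (H' : dfun R) : DD G -> DD G' -> DD H -> DD H' ->
  dle G G' -> dle H H' -> dle (tau G H) (tau G' H').
Proof.
move=> *; apply: (@dle_trans _ (tau G' H)); first exact: tau_monol.
exact: tau_monor.
Qed.

Lemma le_eps0 G : DD G -> dle G (@eps0 R).
Proof.
case=> H1 _ _ H4 _ x; rewrite /eps0; case: ifP => x0.
  by case/andP: (H1 x).
by rewrite H4 // leNgt x0.
Qed.

Lemma tau_lel G H : DD G -> DD H -> dle (tau G H) G.
Proof.
move=> hG hH; rewrite -{2}(tau_idr _ hG); apply: tau_monor => //.
exact: le_eps0.
Qed.

Lemma bigD n (F : 'I_n -> dfun R) : (forall i, DD (F i)) -> DD (\BIG_(i < n) F i).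
Proof.
elim: n F => [|n IH] F hF; first by rewrite big_ord0.
by rewrite big_ord_recl; apply: tauD => //; apply: IH.
Qed.

Lemma big_mono n (F F' : 'I_n -> dfun R) : (forall i, DD (F i)) ->
  (forall i, DD (F' i)) -> (forall i, dle (F i) (F' i)) ->
  dle (\BIG_(i < n) F i) (\BIG_(i < n) F' i).
Proof.
elim: n F F' => [|n IH] F F' hF hF' hle; first by rewrite !big_ord0; exact: dle_refl.
rewrite !big_ord_recl; apply: tau_mono => //; try exact: bigD.
exact: IH.
Qed.

Lemma big_split_tau n (a b : 'I_n -> dfun R) : (forall i, DD (a i)) ->
  (forall i, DD (b i)) ->
  \BIG_(i < n) tau (a i) (b i) = tau (\BIG_(i < n) a i) (\BIG_(i < n) b i).
Proof.
elim: n a b => [|n IH] a b ha hb; first by rewrite !big_ord0 tau_idr.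
rewrite !big_ord_recl IH //.
set A := \BIG_(i < n) a (lift ord0 i).
set B := \BIG_(i < n) b (lift ord0 i).
have hA : DD A by apply: bigD.
have hB : DD B by apply: bigD.
have h0 := ha ord0; have h1 := hb ord0.
rewrite -tauA //; last exact: tauD.
rewrite (tauA _ _ _ h1 hA hB) (tauC _ _ h1 hA) -(tauA _ _ _ hA h1 hB).
rewrite tauA //; exact: tauD.
Qed.

Lemma dscale_eps0 c : 0 <= c -> dscale c (@eps0 R) = @eps0 R.
Proof.
rewrite /dscale; case: eqP => // c0 cge; apply: funext => x.
have cie : (0 < (c^-1)%:E)%E by rewrite lte_fin invr_gt0 lt_neqAle eq_sym; apply/andP; split => //; apply/eqP.
by rewrite /eps0 pmule_lgt0.
Qed.

Lemma dscale_big c n (F : 'I_n -> dfun R) : 0 <= c -> (forall i, DD (F i)) ->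
  dscale c (\BIG_(i < n) F i) = \BIG_(i < n) dscale c (F i).
Proof.
move=> c0; elim: n F => [|n IH] F hF; first by rewrite !big_ord0 dscale_eps0.
by rewrite !big_ord_recl Hdist ?IH //; apply: bigD.
Qed.

Lemma dscale_monoG c G H : dle G H -> dle (dscale c G) (dscale c H).
Proof. by rewrite /dscale; case: eqP => _ h x //; exact: dle_refl. Qed.

Lemma dscale_anti c (c' : R) G : DD G -> 0 <= c -> c <= c' -> dle (dscale c' G) (dscale c G).
Proof.
move=> hG c0 cc'.
have [c'e|c'0] := eqVneq c' 0.
  move: cc'; rewrite c'e => cc'.
  by have -> : c = 0 by apply/eqP; rewrite eq_le cc' c0.
have c'p : 0 < c' by rewrite lt_neqAle eq_sym c'0 (le_trans c0 cc').
have c'ie : (0 < (c'^-1)%:E)%E by rewrite lte_fin invr_gt0.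
have [->|cn0] := eqVneq c 0.
  rewrite /dscale eqxx (negbTE c'0) => x.
  case: hG => H1 _ _ H4 _; rewrite /eps0; case: ifP => x0.
    by case/andP: (H1 (x * (c'^-1)%:E)%E).
  by rewrite H4 // pmule_lle0 // leNgt x0.
have cp : 0 < c by rewrite lt_neqAle eq_sym cn0 c0.
rewrite /dscale (negbTE c'0) (negbTE cn0) => x.
case: hG => _ H2 _ H4 _.
have [x0|x0] := leP x 0%E.
  by rewrite !H4 // pmule_lle0 // lte_fin invr_gt0.
apply: H2; case: x x0 => [r| |] // r0.
  rewrite -!EFinM lee_fin ler_pM2l; last by rewrite -lte_fin.
  by rewrite lef_pV2 ?posrE.
by rewrite !gt0_mulye // lte_fin invr_gt0.
Qed.

Section Meas.
Variables (Omega : Type) (Sigma : set (set Omega)) (gamma : set Omega -> dfun R).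
Hypothesis Hring : setring Sigma.
Hypothesis Hgam : tau_decomposable tau Sigma gamma.

Lemma S0 : Sigma set0. Proof. by case: Hring. Qed.
Lemma SU A B : Sigma A -> Sigma B -> Sigma (A `|` B).
Proof. by case: Hring => _ h _; apply: h. Qed.
Lemma SD A B : Sigma A -> Sigma B -> Sigma (A `\` B).
Proof. by case: Hring => _ _ h; apply: h. Qed.
Lemma SI A B : Sigma A -> Sigma B -> Sigma (A `&` B).
Proof. by move=> a b; rewrite -setDD; apply: SD => //; apply: SD. Qed.

Lemma SUfin m (E : 'I_m -> set Omega) : (forall i, Sigma (E i)) ->
  Sigma [set w | exists i, E i w].
Proof.
elim: m E => [|m IH] E hE.
  have -> : [set w | exists i : 'I_0, E i w] = set0.
    by apply/seteqP; split=> w // -[[]].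
  exact: S0.
have -> : [set w | exists i, E i w] =
    E ord0 `|` [set w | exists i, E (lift ord0 i) w].
  apply/seteqP; split=> w /=.
    case=> i Ei; have [j ije|i0] := unliftP ord0 i.
      by right; exists j; rewrite -ije.
    by left; rewrite -i0.
  by case=> [E0|[j Ej]]; [exists ord0|exists (lift ord0 j)].
by apply: SU => //; apply: IH.
Qed.

Lemma gamD A : Sigma A -> DD (gamma A).
Proof. by case: Hgam => h _ _; apply: h. Qed.
Lemma gam0 : gamma set0 = @eps0 R.
Proof. by case: Hgam. Qed.

Lemma additive_fin (mu : set Omega -> dfun R) :
  (forall A, Sigma A -> DD (mu A)) ->
  (forall A B, Sigma A -> Sigma B -> A `&` B = set0 ->
     mu (A `|` B) = tau (mu A) (mu B)) ->
  forall m (E : 'I_m -> set Omega), (forall i, Sigma (E i)) ->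
  (forall i j, i != j -> E i `&` E j = set0) ->
  forall B, Sigma B ->
  mu B = tau (\BIG_(i < m) mu (B `&` E i)) (mu (B `\` [set w | exists i, E i w])).
Proof.
move=> muD muU; elim=> [|m IH] E hE hdis B hB.
  have -> : B `\` [set w | exists i, E i w] = B.
    apply/seteqP; split=> w /=; first by case.
    by move=> Bw; split=> // -[[]].
  by rewrite big_ord0 tau_idl //; apply: muD.
have hB0 : Sigma (B `&` E ord0) by apply: SI.
have hB1 : Sigma (B `\` E ord0) by apply: SD.
rewrite -{1}(setUIDK B (E ord0)) muU //; last first.
  by apply/seteqP; split=> w //= [[_ ?] [_ ?]].
have e1 : forall i, (B `\` E ord0) `&` E (lift ord0 i) = B `&` E (lift ord0 i).
  move=> i; apply/seteqP; split=> w /=; first by case=> -[].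
  case=> Bw Ew; split=> //; split=> // E0.
  have := hdis ord0 (lift ord0 i) (neq_lift _ _).
  by move/seteqP => [+ _] => /(_ w (conj E0 Ew)).
have e2 : (B `\` E ord0) `\` [set w | exists i, E (lift ord0 i) w] =
          B `\` [set w | exists i, E i w].
  apply/seteqP; split=> w /=.
    case=> -[Bw nE0] nE; split=> // -[i Ei].
    have [j ije|i0] := unliftP ord0 i.
      by apply: nE; exists j; rewrite -ije.
    by apply: nE0; rewrite -i0.
  case=> Bw nE; split; first by split=> // E0; apply: nE; exists ord0.
  by case=> i Ei; apply: nE; exists (lift ord0 i).
rewrite [mu (B `\` E ord0)](IH (fun i => E (lift ord0 i))) //; last first.
  by move=> i j ij; apply: hdis; rewrite (inj_eq (@lift_inj _ ord0)).
under eq_bigr => i _ do rewrite e1.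
rewrite e2 big_ord_recl tauA //.
- exact: muD.
- by apply: bigD => i; apply: muD; apply: SI.
- by apply: muD; apply: SD => //; apply: SUfin.
Qed.

Section Rep.
Variables (n : nat) (x : 'I_n -> R) (E : 'I_n -> set Omega) (h : Omega -> R).
Hypothesis Hrep : simple_rep Sigma x E h.

Lemma xge0 i : 0 <= x i. Proof. by case: Hrep. Qed.
Lemma ES i : Sigma (E i). Proof. by case: Hrep. Qed.
Lemma Edis i j : i != j -> E i `&` E j = set0.
Proof. by case: Hrep => _ _ hh _; apply: hh. Qed.

Lemma hval k w : E k w -> h w = x k.
Proof.
case: Hrep => _ _ hd hs Ew; rewrite hs (bigD1 k) //= big1.
  by rewrite indicE mem_set // mulr1 addr0.
move=> i ik; rewrite indicE memNset ?mulr0 // => Eiw.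
have := hd i k ik; move/seteqP => [+ _] => /(_ w (conj Eiw Ew)).
by [].
Qed.

Lemma hzero w : ~ [set w | exists i, E i w] w -> h w = 0.
Proof.
case: Hrep => _ _ _ hs nE; rewrite hs big1 // => i _.
by rewrite indicE memNset ?mulr0 // => Eiw; apply: nE; exists i.
Qed.

Definition Ir A := simple_integral tau gamma x E A.

Lemma IrD A : Sigma A -> DD (Ir A).
Proof.
move=> hA; apply: bigD => i; apply: inDelta_dscale => //; first exact: xge0.
by apply: gamD; apply: SI => //; exact: ES.
Qed.

Lemma IrU A B : Sigma A -> Sigma B -> A `&` B = set0 ->
  Ir (A `|` B) = tau (Ir A) (Ir B).
Proof.
move=> hA hB AB; rewrite /Ir /simple_integral -big_split_tau; last 2 first.
- move=> i; apply: inDelta_dscale => //; first exact: xge0.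
  by apply: gamD; apply: SI => //; exact: ES.
- move=> i; apply: inDelta_dscale => //; first exact: xge0.
  by apply: gamD; apply: SI => //; exact: ES.
apply: eq_bigr => i _.
rewrite setIUl.
case: Hgam => _ _ ->; first last.
- apply/seteqP; split=> w // /= [[Aw _] [Bw _]].
  by move/seteqP: AB => [+ _] => /(_ w (conj Aw Bw)).
- by apply: SI => //; exact: ES.
- by apply: SI => //; exact: ES.
apply: Hdist; first exact: xge0.
- by apply: gamD; apply: SI => //; exact: ES.
- by apply: gamD; apply: SI => //; exact: ES.
Qed.

Lemma gam_split B : Sigma B ->
  gamma B = tau (\BIG_(i < n) gamma (B `&` E i))
                (gamma (B `\` [set w | exists i, E i w])).
Proof.
move=> hB; apply: additive_fin => //.
- exact: gamD.
- by move=> A C hA hC AC; case: Hgam => _ _ ->.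
- exact: ES.
- exact: Edis.
Qed.

Lemma upper B c : Sigma B -> 0 <= c -> (forall w, B w -> c <= h w) ->
  dle (Ir B) (dscale c (gamma B)).
Proof.
move=> hB c0 hc.
have hBE : forall i, Sigma (B `&` E i) by move=> i; apply: SI => //; exact: ES.
apply: (@dle_trans _ (\BIG_(i < n) dscale c (gamma (B `&` E i)))).
  apply: big_mono.
  - by move=> i; apply: inDelta_dscale => //; [exact: xge0|apply: gamD].
  - by move=> i; apply: inDelta_dscale => //; apply: gamD.
  move=> i; case: (pselect (exists w, (B `&` E i) w)) => [[w [Bw Ew]]|nw].
    apply: dscale_anti => //; first exact: gamD.
    by rewrite -(hval _ _ Ew); apply: hc.
  have -> : B `&` E i = set0.
    by apply/seteqP; split=> w // Bw; apply: nw; exists w.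
  by rewrite gam0 !dscale_eps0 //; exact: xge0.
rewrite -dscale_big //; last by move=> i; apply: gamD.
have [->|cn0] := eqVneq c 0; first by rewrite /dscale eqxx; exact: dle_refl.
have cp : 0 < c by rewrite lt_neqAle eq_sym cn0 c0.
rewrite [gamma B](gam_split _ hB).
have -> : B `\` [set w | exists i, E i w] = set0.
  apply/seteqP; split=> w // /= [Bw nE].
  have := hc w Bw; rewrite (hzero _ nE) => /(lt_le_trans cp).
  by rewrite ltxx.
rewrite gam0 tau_idr; first exact: dle_refl.
by apply: bigD => i; apply: gamD.
Qed.

Lemma lower B c : Sigma B -> 0 <= c -> (forall w, B w -> h w <= c) ->
  dle (dscale c (gamma B)) (Ir B).
Proof.
move=> hB c0 hc.
have hBE : forall i, Sigma (B `&` E i) by move=> i; apply: SI => //; exact: ES.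
apply: (@dle_trans _ (\BIG_(i < n) dscale c (gamma (B `&` E i)))).
  rewrite -dscale_big //; last by move=> i; apply: gamD.
  apply: dscale_monoG; rewrite [gamma B](gam_split _ hB).
  apply: tau_lel; first by apply: bigD => i; apply: gamD.
  by apply: gamD; apply: SD => //; apply: SUfin; exact: ES.
apply: big_mono.
- by move=> i; apply: inDelta_dscale => //; apply: gamD.
- by move=> i; apply: inDelta_dscale => //; [exact: xge0|apply: gamD].
move=> i; case: (pselect (exists w, (B `&` E i) w)) => [[w [Bw Ew]]|nw].
  apply: dscale_anti => //; [exact: gamD|exact: xge0|].
  by rewrite -(hval _ _ Ew); apply: hc.
have -> : B `&` E i = set0.
  by apply/seteqP; split=> w // Bw; apply: nw; exists w.
by rewrite gam0 !dscale_eps0 //; exact: xge0.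
Qed.

End Rep.

Lemma main_sec nf (xf : 'I_nf -> R) (Ef : 'I_nf -> set Omega) (f : Omega -> R)
  ng (xg : 'I_ng -> R) (Eg : 'I_ng -> set Omega) (g : Omega -> R) :
  simple_rep Sigma xf Ef f -> simple_rep Sigma xg Eg g ->
  (forall w, f w <= g w) -> forall A, Sigma A ->
  dle (simple_integral tau gamma xg Eg A) (simple_integral tau gamma xf Ef A).
Proof.
move=> hf hg fg A hA.
have hEf := @ES _ _ _ _ hf.
have eqf := @additive_fin _ (@IrD _ _ _ _ hf) (@IrU _ _ _ _ hf) nf Ef hEf (@Edis _ _ _ _ hf) A hA.
have eqg := @additive_fin _ (@IrD _ _ _ _ hg) (@IrU _ _ _ _ hg) nf Ef hEf (@Edis _ _ _ _ hf) A hA.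
rewrite /Ir in eqf eqg; rewrite eqf eqg.
have hAE : forall i, Sigma (A `&` Ef i) by move=> i; apply: SI.
have hAU : Sigma (A `\` [set w | exists i, Ef i w]) by apply: SD => //; apply: SUfin.
apply: tau_mono.
- by apply: bigD => i; apply: (@IrD _ _ _ _ hg).
- by apply: bigD => i; apply: (@IrD _ _ _ _ hf).
- exact: (@IrD _ _ _ _ hg).
- exact: (@IrD _ _ _ _ hf).
- apply: big_mono.
  + by move=> i; apply: (@IrD _ _ _ _ hg).
  + by move=> i; apply: (@IrD _ _ _ _ hf).
  move=> i; apply: (@dle_trans _ (dscale (xf i) (gamma (A `&` Ef i)))).
    apply: (@upper _ _ _ _ hg) => //; first exact: (@xge0 _ _ _ _ hf).
    by move=> w [_ Ew]; rewrite -(@hval _ _ _ _ hf _ _ Ew).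
  apply: (@lower _ _ _ _ hf) => //; first exact: (@xge0 _ _ _ _ hf).
  by move=> w [_ Ew]; rewrite (@hval _ _ _ _ hf _ _ Ew).
- apply: (@dle_trans _ (dscale 0 (gamma (A `\` [set w | exists i, Ef i w])))).
    apply: (@upper _ _ _ _ hg) => // w [_ nE].
    by rewrite -(@hzero _ _ _ _ hf _ nE).
  apply: (@lower _ _ _ _ hf) => // w [_ nE].
  by rewrite (@hzero _ _ _ _ hf _ nE).
Qed.

End Meas.

End Tau.

Theorem theorem4p4 (R : realType) (Omega : Type) (w0 : Omega)
  (tau : dfun R -> dfun R -> dfun R)
  (Sigma : set (set Omega)) (gamma : set Omega -> dfun R)
  (f g : Omega -> R)
  (nf : nat) (xf : 'I_nf -> R) (Ef : 'I_nf -> set Omega)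
  (ng : nat) (xg : 'I_ng -> R) (Eg : 'I_ng -> set Omega) :
  is_triangle_function tau -> distributive_tf tau ->
  setring Sigma ->
  tau_decomposable tau Sigma gamma ->
  simple_rep Sigma xf Ef f -> simple_rep Sigma xg Eg g ->
  (forall w, f w <= g w) ->
  forall A, Sigma A ->
    dle (simple_integral tau gamma xg Eg A) (simple_integral tau gamma xf Ef A).
Proof.
move=> Htau Hdist Hring Hgam hf hg fg A hA.
have he : inDelta (@eps0 R).
  case: Hgam => h0 <- _; apply: h0; by case: Hring.
exact: (@main_sec R tau Htau Hdist he Omega Sigma gamma Hring Hgam nf xf Ef f ng xg Eg g hf hg fg A hA).
Qed.
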